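(* Let $W^{(1)}$ be a pro-$p$ Coxeter group, $\mathcal O$ its set of orientations, and $\mathfrak A(W^{(1)})$ the group with generators $\{T_w\}_{w\in W^{(1)}}$ and relations $T_{ww'}=T_wT_{w'}$ whenever $\ell(ww')=\ell(w)+\ell(w')$ (notation as in the context). Then there exists a unique map \[ \theta:W^{(1)}\longrightarrow \mathrm{Hom}_{\mathrm{Set}}(\mathcal O,\mathfrak A(W^{(1)})),\qquad w\mapsto(\mathfrak o\mapsto\theta_{\mathfrak o}(w)) \] such that $\theta_{\mathfrak o}(ww')=\theta_{\mathfrak o}(w)\,\theta_{\mathfrak o\bullet w}(w')$ for all $w,w'\in W^{(1)}$ and $\mathfrak o\in\mathcal O$; $\theta_{\mathfrak o}(n_s)=T_{n_s^{\varepsilon}}^{\varepsilon}$ with $\varepsilon=\mathfrak o(1,s)\in\{\pm1\}$ for all $s\in S$ and $\mathfrak o\in\mathcal O$ (i.e. $\theta_{\mathfrak o}(n_s)=T_{n_s}$ if $\varepsilon=1$ and $=T_{n_s^{-1}}^{-1}$ if $\varepsilon=-1$); and $\theta_{\mathfrak o}(u)=T_u$ for all $u\in\Omega^{(1)}$ and $\mathfrak o\in\mathcal O$.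
   Context: Coxeter group $(W_{\mathrm{aff}},S)$ with length $\ell$ and $m(s,t)$ the order of $st$. Extended Coxeter group: $W=W_{\mathrm{aff}}\rtimes\Omega$ with $(W_{\mathrm{aff}},S)$ Coxeter and $\Omega$ preserving $S$ under conjugation; $\ell(wu)=\ell(w)$ for $w\in W_{\mathrm{aff}}$, $u\in\Omega$. Pro-$p$ Coxeter group: extension $1\to T\to W^{(1)}\xrightarrow{\pi}W\to1$, $T$ abelian, with lifts $n_s\in\pi^{-1}(s)$ satisfying the braid relations $n_sn_tn_s\cdots=n_tn_sn_t\cdots$ ($m(s,t)$ factors) when $m(s,t)<\infty$; $\ell$ on $W^{(1)}$ is $\ell\circ\pi$; $\Omega^{(1)}=\pi^{-1}(\Omega)$. Orientations: an orientation of $(W_{\mathrm{aff}},S)$ is a map $\mathfrak o:W_{\mathrm{aff}}\times S\to\{\pm1\}$ with (OR1) $\mathfrak o(ws,s)=-\mathfrak o(w,s)$ and (OR2) for $s,t\in S$ with $m=m(s,t)<\infty$ and $w\in W_{\mathrm{aff}}$, the sequences $(\mathfrak o(w,s),\mathfrak o(ws,t),\mathfrak o(wst,s),\dots)$ and $(\mathfrak o(w,t),\mathfrak o(wt,s),\dots)$ of length $m$ are, for some $0\le k\le m$, either ($k$ pluses then $m-k$ minuses) and ($m-k$ minuses then $k$ pluses), or ($k$ minuses then $m-k$ pluses) and ($m-k$ pluses then $k$ minuses). An orientation of $W$ is a map $W\times S\to\{\pm1\}$ of the form $(wu,s)\mapsto\mathfrak o(w,usu^{-1})$ ($w\in W_{\mathrm{aff}},u\in\Omega$)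 with $\mathfrak o$ an orientation of $W_{\mathrm{aff}}$; an orientation of $W^{(1)}$ is a map $(w,s)\mapsto\mathfrak o(\pi(w),s)$ with $\mathfrak o$ an orientation of $W$. $\mathcal O$ is the set of orientations of $W^{(1)}$, with right $W^{(1)}$-action $(\mathfrak o\bullet w)(w',s)=\mathfrak o(ww',s)$. *)

(* Defs.v *)
From Stdlib Require Import List Arith Bool.
Set Implicit Arguments.
Unset Strict Implicit.

Record group := Group {
  gcar :> Type;
  gmul : gcar -> gcar -> gcar;
  gone : gcar;
  ginv : gcar -> gcar;
  gmulA : forall x y z, gmul x (gmul y z) = gmul (gmul x y) z;
  gmul1g : forall x, gmul gone x = x;
  gmulVg : forall x, gmul (ginv x) x = gone }.

Arguments gmul {g} x y.
Arguments gone {g}.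
Arguments ginv {g} x.

Declare Scope grp_scope.
Delimit Scope grp_scope with grp.
Notation "x * y" := (gmul x y) : grp_scope.
Local Open Scope grp_scope.

Fixpoint gpow (G : group) (x : G) (k : nat) : G :=
  match k with O => gone | Datatypes.S k => x * gpow x k end.

Definition prodl (G : group) (l : list G) : G := fold_right (@gmul G) gone l.

Definition is_hom (G H : group) (f : G -> H) : Prop :=
  forall x y, f (x * y) = f x * f y.

Definition order_is (G : group) (x : G) (m : nat) : Prop :=
  0 < m /\ gpow x m = gone /\ forall k, 0 < k -> gpow x k = gone -> m <= k.

Fixpoint alt (X : Type) (a b : X) (k : nat) : list X :=
  match k with O => nil | Datatypes.S k => a :: alt b a k end.

(** * Coxeter systems (W, S): S is given as a type with an injection s into W.
    m(a,b) is the order of s a * s b ("finite" iff order_is holds for some m).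
    Coxeter = the presentation <S | s^2, (st)^m(s,t) for m(s,t) finite>. *)
Definition is_coxeter_system (W : group) (S : Type) (s : S -> W) : Prop :=
  (forall a b, s a = s b -> a = b) /\
  (forall a, s a <> gone /\ s a * s a = gone) /\
  (forall w : W, exists l : list S, w = prodl (map s l)) /\
  (forall (G : group) (f : S -> G),
     (forall a, f a * f a = gone) ->
     (forall a b m, order_is (s a * s b) m -> gpow (f a * f b) m = gone) ->
     exists g : W -> G, is_hom g /\ forall a, g (s a) = f a).

Definition word_length (W : group) (S : Type) (s : S -> W) (w : W) (k : nat) : Prop :=
  (exists l : list S, length l = k /\ prodl (map s l) = w) /\
  (forall l : list S, prodl (map s l) = w -> k <= length l).

(** * Extended Coxeter groups W = W_aff >| Omega.
    W_aff is embedded in W by the injective homomorphism iota. *)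
Definition is_extended_coxeter (Waff : group) (S : Type) (s : S -> Waff)
    (W : group) (iota : Waff -> W) (Omega : W -> Prop) : Prop :=
  is_coxeter_system s /\
  is_hom iota /\ (forall a b, iota a = iota b -> a = b) /\
  Omega gone /\ (forall u v, Omega u -> Omega v -> Omega (u * v)) /\
  (forall u, Omega u -> Omega (ginv u)) /\
  (forall (a : Waff) (w : W), exists b, w * iota a * ginv w = iota b) /\
  (forall w : W, exists a u, Omega u /\ w = iota a * u) /\
  (forall a u a' u', Omega u -> Omega u' -> iota a * u = iota a' * u' ->
       a = a' /\ u = u') /\
  (forall u x, Omega u -> exists y, u * iota (s x) * ginv u = iota (s y)).

Definition lenW (Waff : group) (S : Type) (s : S -> Waff)
    (W : group) (iota : Waff -> W) (Omega : W -> Prop) (w : W) (k : nat) : Prop :=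
  exists a u, Omega u /\ w = iota a * u /\ word_length s a k.

(** * Pro-p Coxeter groups: 1 -> T -> W1 -pi-> W -> 1, T = ker pi abelian,
    lifts n_s of s satisfying the braid relations. *)
Definition is_pro_p_coxeter (Waff : group) (S : Type) (s : S -> Waff)
    (W : group) (iota : Waff -> W) (Omega : W -> Prop)
    (W1 : group) (pi : W1 -> W) (n : S -> W1) : Prop :=
  is_extended_coxeter s iota Omega /\
  is_hom pi /\ (forall w : W, exists w1, pi w1 = w) /\
  (forall x y : W1, pi x = gone -> pi y = gone -> x * y = y * x) /\
  (forall a, pi (n a) = iota (s a)) /\
  (forall a b m, order_is (s a * s b) m ->
     prodl (map n (alt a b m)) = prodl (map n (alt b a m))).

(** * Orientations (sign +1 is [true], -1 is [false]) *)
Definition is_orientation_aff (Waff : group) (S : Type) (s : S -> Waff)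
    (o : Waff -> S -> bool) : Prop :=
  (forall w a, o (w * s a) a = negb (o w a)) /\
  (forall a b m w, order_is (s a * s b) m ->
     let seq1 := fun i => o (w * prodl (map s (alt a b i))) (if Nat.even i then a else b) in
     let seq2 := fun i => o (w * prodl (map s (alt b a i))) (if Nat.even i then b else a) in
     exists k, k <= m /\
       (((forall i, i < m -> seq1 i = (i <? k)) /\
         (forall i, i < m -> seq2 i = negb (i <? m - k)))
        \/
        ((forall i, i < m -> seq1 i = negb (i <? k)) /\
         (forall i, i < m -> seq2 i = (i <? m - k))))).

Definition is_orientation_W (Waff : group) (S : Type) (s : S -> Waff)
    (W : group) (iota : Waff -> W) (Omega : W -> Prop) (O : W -> S -> bool) : Prop :=
  exists o, is_orientation_aff s o /\
    forall a u x y, Omega u -> iota (s y) = u * iota (s x) * ginv u ->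
      O (iota a * u) x = o a y.

Definition is_orientation_W1 (Waff : group) (S : Type) (s : S -> Waff)
    (W : group) (iota : Waff -> W) (Omega : W -> Prop)
    (W1 : group) (pi : W1 -> W) (O1 : W1 -> S -> bool) : Prop :=
  exists O, is_orientation_W s iota Omega O /\ forall w x, O1 w x = O (pi w) x.

Definition orient_act (W1 : group) (S : Type) (o : W1 -> S -> bool) (w : W1)
  : W1 -> S -> bool := fun w' x => o (w * w') x.

(** * The group Aff(W1) = < T_w | T_{ww'} = T_w T_{w'} if ell(ww') = ell(w)+ell(w') >,
    given by its universal property (presentation). *)
Definition aff_rel (Waff : group) (S : Type) (s : S -> Waff)
    (W : group) (iota : Waff -> W) (Omega : W -> Prop)
    (W1 : group) (pi : W1 -> W) (G : group) (f : W1 -> G) : Prop :=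
  forall (w w' : W1) (k l : nat),
    lenW s iota Omega (pi w) k -> lenW s iota Omega (pi w') l ->
    lenW s iota Omega (pi (w * w')) (k + l) ->
    f (w * w') = f w * f w'.

Definition is_Aff_presentation (Waff : group) (S : Type) (s : S -> Waff)
    (W : group) (iota : Waff -> W) (Omega : W -> Prop)
    (W1 : group) (pi : W1 -> W) (A : group) (Tg : W1 -> A) : Prop :=
  aff_rel s iota Omega pi Tg /\
  forall (G : group) (f : W1 -> G), aff_rel s iota Omega pi f ->
    exists g : A -> G, is_hom g /\ (forall w, g (Tg w) = f w) /\
      forall g' : A -> G, is_hom g' -> (forall w, g' (Tg w) = f w) ->
        forall x, g' x = g x.

(** the defining properties of theta (only constrained on orientations) *)
Definition theta_spec (Waff : group) (S : Type) (s : S -> Waff)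
    (W : group) (iota : Waff -> W) (Omega : W -> Prop)
    (W1 : group) (pi : W1 -> W) (n : S -> W1) (A : group) (Tg : W1 -> A)
    (theta : W1 -> (W1 -> S -> bool) -> A) : Prop :=
  (forall (w w' : W1) o, is_orientation_W1 s iota Omega pi o ->
     theta (w * w') o = theta w o * theta w' (orient_act o w)) /\
  (forall x o, is_orientation_W1 s iota Omega pi o ->
     theta (n x) o = if o gone x then Tg (n x) else ginv (Tg (ginv (n x)))) /\
  (forall u o, Omega (pi u) -> is_orientation_W1 s iota Omega pi o ->
     theta u o = Tg u).

(* Main.v *)
Require Import Defs.
From Stdlib Require Import List Arith Bool Lia PeanoNat.
From Stdlib Require Import ClassicalEpsilon FunctionalExtensionality ProofIrrelevance Classical.
Import ListNotations.
Set Implicit Arguments.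
Unset Strict Implicit.
Local Open Scope grp_scope.


Section GroupLemmas.
Variable G : group.
Implicit Types x y z : G.

Lemma mulgV x : x * ginv x = gone.
Proof.
  rewrite <- (gmul1g (x * ginv x)).
  rewrite <- (gmulVg (ginv x)) at 1.
  rewrite <- gmulA. rewrite (gmulA (ginv x) x). rewrite gmulVg, gmul1g. apply gmulVg.
Qed.
Lemma mulg1 x : x * gone = x.
Proof. rewrite <- (gmulVg x), gmulA, mulgV. apply gmul1g. Qed.
Lemma mulKg x y : ginv x * (x * y) = y.
Proof. rewrite gmulA, gmulVg. apply gmul1g. Qed.
Lemma mulVKg x y : x * (ginv x * y) = y.
Proof. rewrite gmulA, mulgV. apply gmul1g. Qed.
Lemma mulgK x y : (y * x) * ginv x = y.
Proof. rewrite <- gmulA, mulgV. apply mulg1. Qed.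
Lemma mulgKV x y : (y * ginv x) * x = y.
Proof. rewrite <- gmulA, gmulVg. apply mulg1. Qed.
Lemma mulg_injl x y z : x * y = x * z -> y = z.
Proof. intro H. rewrite <- (mulKg x y), H. apply mulKg. Qed.
Lemma mulg_injr x y z : y * x = z * x -> y = z.
Proof. intro H. rewrite <- (mulgK x y), H. apply mulgK. Qed.
Lemma inv_uniq x y : x * y = gone -> y = ginv x.
Proof. intro H. apply (mulg_injl (x:=x)). rewrite H. symmetry; apply mulgV. Qed.
Lemma invK x : ginv (ginv x) = x.
Proof. symmetry. apply inv_uniq. apply gmulVg. Qed.
Lemma invM x y : ginv (x * y) = ginv y * ginv x.
Proof. symmetry. apply inv_uniq. rewrite <- gmulA, (gmulA y), mulgV, gmul1g. apply mulgV. Qed.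
Lemma inv1 : ginv (gone : G) = gone.
Proof. symmetry. apply inv_uniq. apply gmul1g. Qed.
Lemma inv_inj x y : ginv x = ginv y -> x = y.
Proof. intro H. rewrite <- (invK x), H. apply invK. Qed.
Lemma idem1 x : x * x = x -> x = gone.
Proof. intro H. apply (mulg_injl (x:=x)). rewrite H. symmetry. apply mulg1. Qed.
Lemma invol_inv x : x * x = gone -> ginv x = x.
Proof. intro H. symmetry. apply inv_uniq. exact H. Qed.
End GroupLemmas.

Lemma hom1 (G H : group) (f : G -> H) : is_hom f -> f gone = gone.
Proof. intro Hf. apply idem1. rewrite <- Hf. rewrite gmul1g. reflexivity. Qed.
Lemma homV (G H : group) (f : G -> H) : is_hom f -> forall x, f (ginv x) = ginv (f x).
Proof. intros Hf x. apply inv_uniq. rewrite <- Hf, mulgV. apply hom1; auto. Qed.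
Lemma hom_prodl (G H : group) (f : G -> H) : is_hom f -> forall l, f (prodl l) = prodl (map f l).
Proof. intros Hf l. induction l; simpl. apply hom1; auto. rewrite Hf, IHl. reflexivity. Qed.
Lemma prodl_app (G : group) (l1 l2 : list G) : prodl (l1 ++ l2) = prodl l1 * prodl l2.
Proof. induction l1; simpl. symmetry; apply gmul1g. rewrite IHl1. apply gmulA. Qed.


Definition ev {X} (k : nat) (a b : X) := if Nat.even k then a else b.

Lemma length_alt X (a b : X) k : length (alt a b k) = k.
Proof. revert a b; induction k; intros; simpl; auto. Qed.

Lemma alt_add X (a b : X) j k : alt a b (j + k) = alt a b j ++ alt (ev j a b) (ev j b a) k.
Proof.
  revert a b; induction j; intros; simpl. reflexivity.
  rewrite IHj. unfold ev. rewrite Nat.even_succ, <- Nat.negb_even.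
  destruct (Nat.even j); reflexivity.
Qed.

Lemma alt_Sr X (a b : X) k : alt a b (S k) = alt a b k ++ [ev k a b].
Proof. rewrite <- Nat.add_1_r, alt_add. reflexivity. Qed.

Lemma rev_alt X (a b : X) m : rev (alt a b m) = alt (ev m b a) (ev m a b) m.
Proof.
  revert a b; induction m; intros. reflexivity.
  rewrite (alt_Sr (ev (S m) b a)). change (rev (alt a b (S m))) with (rev (alt b a m) ++ [a]).
  rewrite IHm. unfold ev. rewrite Nat.even_succ, <- Nat.negb_even.
  destruct (Nat.even m); reflexivity.
Qed.

Lemma firstn_alt X (a b : X) k m : k <= m -> firstn k (alt a b m) = alt a b k.
Proof.
  intro H. replace m with (k + (m - k)) by lia. rewrite alt_add.
  rewrite firstn_app, length_alt, Nat.sub_diag, firstn_all2 by (rewrite length_alt; lia).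
  simpl. rewrite app_nil_r. reflexivity.
Qed.

Lemma skipn_alt X (a b : X) k m : k <= m -> skipn k (alt a b m) = alt (ev k a b) (ev k b a) (m - k).
Proof.
  intro H. replace m with (k + (m - k)) at 1 by lia. rewrite alt_add.
  rewrite skipn_app, length_alt, Nat.sub_diag, skipn_all2 by (rewrite length_alt; lia).
  reflexivity.
Qed.

Lemma rev_alt_app X (a b : X) j k :
  rev (alt b a j) ++ alt a b k = alt (ev j a b) (ev j b a) (j + k).
Proof.
  revert a b k; induction j; intros; simpl. reflexivity.
  rewrite <- app_assoc. simpl. change (b :: alt a b k) with (alt b a (S k)).
  rewrite IHj. unfold ev. rewrite Nat.even_succ, <- Nat.negb_even.
  rewrite Nat.add_succ_r. destruct (Nat.even j); reflexivity.
Qed.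

Lemma map_alt X Y (f : X -> Y) a b k : map f (alt a b k) = alt (f a) (f b) k.
Proof. revert a b; induction k; intros; simpl; auto. rewrite IHk; auto. Qed.

Lemma alt_in X (a b : X) k z : In z (alt a b k) -> z = a \/ z = b.
Proof.
  revert a b; induction k; intros a b H; simpl in H. contradiction.
  destruct H as [H|H]; auto. apply IHk in H. tauto.
Qed.

Section Inv.
Variable G : group.
Implicit Types x y z : G.

Lemma gpow_alt x y k : prodl (alt x y (k + k)) = gpow (x * y) k.
Proof.
  induction k; simpl. reflexivity.
  rewrite Nat.add_succ_r. simpl. rewrite IHk. apply gmulA.
Qed.

Lemma prodl_rev_inv (l : list G) : (forall z, In z l -> z * z = gone) ->
  prodl (rev l) = ginv (prodl l).
Proof.
  induction l; intros H; simpl. symmetry; apply inv1.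
  rewrite prodl_app, IHl by (intros; apply H; simpl; auto). simpl.
  rewrite mulg1, (invM a). f_equal. symmetry. apply invol_inv. apply H; simpl; auto.
Qed.

Lemma alt_braid_iff x y m : x * x = gone -> y * y = gone ->
  (gpow (x * y) m = gone <-> prodl (alt x y m) = prodl (alt y x m)).
Proof.
  intros Hx Hy.
  assert (Hinv : forall a b k, (a = x \/ a = y) -> (b = x \/ b = y) ->
      prodl (rev (alt a b k)) = ginv (prodl (alt a b k))).
  { intros a b k Ha Hb. apply prodl_rev_inv. intros z Hz. apply alt_in in Hz.
    destruct Hz as [->| ->]; destruct Ha as [->| ->]; auto; destruct Hb as [->| ->]; auto. }
  rewrite <- gpow_alt, alt_add, prodl_app.
  assert (E : alt y x m = rev (alt (ev m x y) (ev m y x) m)).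
  { rewrite rev_alt. unfold ev. destruct (Nat.even m); reflexivity. }
  rewrite E, Hinv by (unfold ev; destruct (Nat.even m); auto).
  split; intro H.
  - apply inv_uniq in H. rewrite H, invK. reflexivity.
  - rewrite H. apply gmulVg.
Qed.

Lemma gpow_inv z k : gpow (ginv z) k = ginv (gpow z k).
Proof.
  induction k; simpl. symmetry; apply inv1.
  rewrite IHk. rewrite invM.
  assert (C : forall j, gpow z j * z = z * gpow z j).
  { induction j; simpl. rewrite mulg1; apply gmul1g. rewrite <- gmulA, IHj. reflexivity. }
  rewrite <- !invM. f_equal. apply C.
Qed.

Lemma order_swap x y m : x * x = gone -> y * y = gone -> order_is (x * y) m -> order_is (y * x) m.
Proof.
  intros Hx Hy [H0 [H1 H2]].
  assert (E : y * x = ginv (x * y)).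
  { rewrite invM, !invol_inv; auto. }
  rewrite E. split; auto. split. rewrite gpow_inv, H1. apply inv1.
  intros k Hk Hp. apply H2; auto. rewrite gpow_inv in Hp.
  rewrite <- (invK (gpow (x*y) k)), Hp. apply inv1.
Qed.
End Inv.

Record perm (X : Type) := Perm { pf : X -> X; pg : X -> X;
  pfg : forall x, pf (pg x) = x; pgf : forall x, pg (pf x) = x }.

Lemma perm_ext X (p q : perm X) : (forall x, pf p x = pf q x) -> p = q.
Proof.
  intro H. assert (Hf : pf p = pf q) by (apply functional_extensionality; auto).
  assert (Hg : pg p = pg q).
  { apply functional_extensionality. intro x. rewrite <- (pfg q x) at 1.
    rewrite <- H. apply pgf. }
  destruct p, q; simpl in *. subst. f_equal; apply proof_irrelevance.
Qed.

Section PermGroup.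
Variable X : Type.
Definition pmul (p q : perm X) : perm X.
Proof.
  refine (@Perm X (fun x => pf q (pf p x)) (fun x => pg p (pg q x)) _ _);
  intro x; rewrite ?pfg, ?pgf; reflexivity.
Defined.
Definition pone : perm X := @Perm X (fun x => x) (fun x => x) (fun x => eq_refl) (fun x => eq_refl).
Definition pinv (p : perm X) : perm X := @Perm X (pg p) (pf p) (pgf p) (pfg p).
Definition PermG : group.
Proof.
  refine (@Group (perm X) pmul pone pinv _ _ _); intros;
  apply perm_ext; intros; simpl; rewrite ?pgf, ?pfg; reflexivity.
Defined.
End PermGroup.

Definition inv_perm X (f : X -> X) (H : forall x, f (f x) = x) : perm X := Perm H H.

Lemma pf_prodl X (l : list (PermG X)) x :
  pf (prodl l) x = fold_left (fun y p => pf p y) l x.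
Proof. revert x; induction l; intros; simpl; auto. Qed.


Definition eqb_cl {X} (x y : X) : bool := if excluded_middle_informative (x = y) then true else false.
Lemma eqb_cl_true X (x y : X) : eqb_cl x y = true <-> x = y.
Proof. unfold eqb_cl. destruct excluded_middle_informative; split; congruence. Qed.
Lemma eqb_cl_false X (x y : X) : eqb_cl x y = false <-> x <> y.
Proof. unfold eqb_cl. destruct excluded_middle_informative; split; congruence. Qed.

Lemma even_dd d : Nat.even (d + d) = true.
Proof. induction d; simpl; auto. rewrite Nat.add_succ_r. exact IHd. Qed.

Lemma eqb_T X (x y : X) : eqb_cl x y = true -> x = y.
Proof. apply eqb_cl_true. Qed.
Lemma eqb_F X (x y : X) : eqb_cl x y = false -> x <> y.
Proof. apply eqb_cl_false. Qed.
Lemma eqb_refl X (x : X) : eqb_cl x x = true.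
Proof. apply eqb_cl_true. reflexivity. Qed.
Lemma eqb_neq X (x y : X) : x <> y -> eqb_cl x y = false.
Proof. apply eqb_cl_false. Qed.

Definition xfold {X} (x : X) (l : list X) : bool :=
  fold_right (fun y acc => xorb (eqb_cl x y) acc) false l.

Lemma xfold_cons X (x a : X) l : xfold x (a :: l) = xorb (eqb_cl x a) (xfold x l).
Proof. reflexivity. Qed.

Lemma xfold_app X (x : X) l1 l2 : xfold x (l1 ++ l2) = xorb (xfold x l1) (xfold x l2).
Proof. induction l1; simpl; auto. unfold xfold in *. simpl. rewrite IHl1. symmetry. apply xorb_assoc. Qed.

Lemma xfold_notin X (x : X) l : ~ In x l -> xfold x l = false.
Proof.
  induction l; intro H; [reflexivity|]. simpl in H. rewrite xfold_cons.
  rewrite IHl by tauto. assert (eqb_cl x a = false) by (apply eqb_cl_false; intro; subst; tauto).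
  rewrite H0; reflexivity.
Qed.

Lemma xfold_in X (x : X) l : NoDup l -> In x l -> xfold x l = true.
Proof.
  induction l; intros Hn Hi; simpl in Hi. contradiction. inversion Hn; subst.
  rewrite xfold_cons. destruct Hi as [->|Hi].
  - rewrite (proj2 (eqb_cl_true x x) eq_refl). rewrite xfold_notin; auto.
  - rewrite IHl; auto. assert (eqb_cl x a = false) by (apply eqb_cl_false; intro; subst; tauto).
    rewrite H; reflexivity.
Qed.

Lemma xfold_true_in X (x : X) l : xfold x l = true -> In x l.
Proof. intro H. destruct (classic (In x l)); auto. rewrite xfold_notin in H; auto; discriminate. Qed.

Section Coxeter.
Variables (Waff : group) (Sg : Type) (s : Sg -> Waff).
Hypothesis Hcox : is_coxeter_system s.

Definition val (L : list Sg) : Waff := prodl (map s L).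
Definition reduced (L : list Sg) := word_length s (val L) (length L).

Lemma s_inv a : s a * s a = gone.
Proof. destruct Hcox as [_ [H _]]. apply H. Qed.
Lemma s_neq1 a : s a <> gone.
Proof. destruct Hcox as [_ [H _]]. apply H. Qed.

Lemma val_app L1 L2 : val (L1 ++ L2) = val L1 * val L2.
Proof. unfold val. rewrite map_app. apply prodl_app. Qed.

Lemma val_rev L : val (rev L) = ginv (val L).
Proof.
  unfold val. rewrite map_rev. apply prodl_rev_inv. intros z Hz.
  apply in_map_iff in Hz. destruct Hz as [a [<- _]]. apply s_inv.
Qed.

Lemma val_alt_even a b d r :
  val (alt a b (d + d + r)) = gpow (s a * s b) d * val (alt a b r).
Proof.
  rewrite alt_add, val_app. unfold ev. rewrite even_dd. f_equal.
  unfold val. rewrite map_alt. apply gpow_alt.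
Qed.

Definition cj a (y : Waff) := s a * y * s a.
Lemma cj_inj a y z : cj a y = cj a z -> y = z.
Proof.
  unfold cj. intro H. apply mulg_injr in H. apply mulg_injl in H. exact H.
Qed.
Lemma cj_invol a y : cj a (cj a y) = y.
Proof.
  unfold cj. rewrite !gmulA. rewrite s_inv, gmul1g. rewrite <- gmulA, s_inv. apply mulg1.
Qed.

Fixpoint rhos (L : list Sg) : list Waff :=
  match L with [] => [] | a :: L => s a :: map (cj a) (rhos L) end.

Lemma length_rhos L : length (rhos L) = length L.
Proof. induction L; simpl; auto. rewrite length_map; auto. Qed.

Lemma xfold_map_cj a x l : xfold x (map (cj a) l) = xfold (cj a x) l.
Proof.
  induction l; [reflexivity|]. simpl map. rewrite !xfold_cons, IHl. f_equal.
  destruct (eqb_cl x (cj a a0)) eqn:E1; destruct (eqb_cl (cj a x) a0) eqn:E2; auto.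
  - apply eqb_T in E1. apply eqb_F in E2. rewrite E1 in E2. rewrite cj_invol in E2. tauto.
  - apply eqb_F in E1. apply eqb_T in E2. rewrite <- E2 in E1. rewrite cj_invol in E1. tauto.
Qed.

Definition piA a (xe : Waff * bool) : Waff * bool :=
  (cj a (fst xe), xorb (snd xe) (eqb_cl (fst xe) (s a))).

Lemma piA_invol a xe : piA a (piA a xe) = xe.
Proof.
  destruct xe as [x e]. unfold piA; simpl. rewrite cj_invol. f_equal.
  destruct (eqb_cl x (s a)) eqn:E1; destruct (eqb_cl (cj a x) (s a)) eqn:E2; simpl;
    rewrite ?xorb_false_r, ?xorb_true_r, ?negb_involutive; auto.
  - apply eqb_T in E1. apply eqb_F in E2. rewrite E1 in E2. unfold cj in E2.
    rewrite <- gmulA, s_inv, mulg1 in E2. tauto.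
  - apply eqb_F in E1. apply eqb_T in E2. exfalso. apply E1. apply (cj_inj (a:=a)).
    rewrite E2. unfold cj. rewrite <- gmulA, s_inv, mulg1. reflexivity.
Qed.

Definition apw (L : list Sg) xe := fold_left (fun y a => piA a y) L xe.

Lemma apw_formula L x e :
  apw L (x, e) = (ginv (val L) * x * val L, xorb e (xfold x (rhos L))).
Proof.
  revert x e; induction L as [|a L IH]; intros x e; simpl.
  - unfold val; simpl. rewrite inv1, gmul1g, mulg1, xorb_false_r. reflexivity.
  - unfold apw in *. simpl. unfold piA at 2. simpl. rewrite IH. f_equal.
    + change (val (a::L)) with (s a * val L). rewrite invM, (invol_inv (s_inv a)).
      unfold cj. rewrite !gmulA. reflexivity.
    +
      rewrite xfold_map_cj. rewrite xorb_assoc. reflexivity.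
Qed.


Lemma val_cons a L : val (a :: L) = s a * val L.
Proof. reflexivity. Qed.
Lemma val_nil : val [] = gone.
Proof. reflexivity. Qed.

Definition rf a b k := val (alt a b (k + k + 1)).

Lemma rhos_alt a b j : rhos (alt a b j) = map (rf a b) (seq 0 j).
Proof.
  revert a b; induction j; intros a b; [reflexivity|].
  change (rhos (alt a b (S j))) with (s a :: map (cj a) (rhos (alt b a j))).
  rewrite IHj. simpl seq. simpl map. f_equal.
  - unfold rf. simpl. unfold val; simpl. rewrite mulg1. reflexivity.
  - rewrite <- seq_shift, !map_map. apply map_ext. intro k. unfold rf, cj.
    replace (S k + S k + 1) with (S (S (k + k + 1))) by lia.
    rewrite alt_Sr. change (alt a b (S (k+k+1))) with (a :: alt b a (k + k + 1)).
    unfold ev. replace (S (k+k+1)) with (S k + S k) by lia. rewrite even_dd.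
    rewrite <- app_comm_cons, val_cons, val_app. unfold val at 3. simpl. rewrite mulg1, gmulA.
    reflexivity.
Qed.

Lemma rf_shift a b m k d : gpow (s a * s b) m = gone -> rf a b (k + m * d) = rf a b k.
Proof.
  intro H. induction d. rewrite Nat.mul_0_r, Nat.add_0_r. reflexivity.
  rewrite <- IHd. unfold rf.
  replace (k + m * S d + (k + m * S d) + 1) with (m + m + (k + m * d + (k + m * d) + 1)) by lia.
  rewrite val_alt_even, H, gmul1g. reflexivity.
Qed.

Lemma rf_inj a b m k k' : order_is (s a * s b) m -> k < m -> k' < m -> rf a b k = rf a b k' -> k = k'.
Proof.
  intros [H0 [H1 H2]] Hk Hk' E.
  assert (forall i j, i < j -> j < m -> rf a b i <> rf a b j).
  { intros i j Hij Hj E'. unfold rf in E'.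
    replace (j + j + 1) with ((j - i) + (j - i) + (i + i + 1)) in E' by lia.
    rewrite (val_alt_even a b (j-i) (i+i+1)) in E'.
    rewrite <- (gmul1g (val (alt a b (i + i + 1)))) in E' at 1.
    apply mulg_injr in E'. symmetry in E'. apply H2 in E'; lia. }
  destruct (Nat.lt_trichotomy k k') as [L|[L|L]]; auto.
  - exfalso; eapply H; eauto.
  - exfalso; eapply H; eauto.
Qed.

Lemma rhos_alt_nodup a b m j : order_is (s a * s b) m -> j <= m -> NoDup (rhos (alt a b j)).
Proof.
  intros Ho Hj. rewrite rhos_alt. apply NoDup_map_NoDup_ForallPairs; [|apply seq_NoDup].
  intros x y Hx Hy E. apply in_seq in Hx. apply in_seq in Hy. eapply rf_inj; eauto; lia.
Qed.

Lemma xfold_period a b m x : gpow (s a * s b) m = gone -> xfold x (rhos (alt a b (m + m))) = false.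
Proof.
  intro H. rewrite rhos_alt, seq_app, map_app, xfold_app.
  assert (E : forall len st, map (rf a b) (seq (st + m) len) = map (rf a b) (seq st len)).
  { induction len; intros st; simpl; auto. f_equal.
    - pose proof (@rf_shift a b m st 1 H) as R. rewrite Nat.mul_1_r in R. exact R.
    - replace (S (st+m)) with (S st + m) by lia. apply IHlen. }
  pose proof (E m 0) as E0. simpl plus in E0. change (0 + m) with m. rewrite E0. apply xorb_nilpotent.
Qed.

Definition PiP a : PermG (Waff * bool) := inv_perm (piA_invol a).

Lemma pf_PiP L z : pf (prodl (map PiP L)) z = apw L z.
Proof.
  rewrite pf_prodl. revert z; induction L; intros z; simpl; auto.
Qed.

Lemma PiP_hom : exists g : Waff -> PermG (Waff * bool), is_hom g /\ forall a, g (s a) = PiP a.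
Proof.
  destruct Hcox as [_ [_ [_ U]]]. apply U.
  - intro a. apply perm_ext. intro x. simpl. apply piA_invol.
  - intros a b m Ho. apply perm_ext. intros [x e].
    rewrite <- gpow_alt. rewrite <- (map_alt PiP). rewrite pf_PiP, apw_formula.
    destruct Ho as [_ [Hm _]]. rewrite xfold_period by auto.
    replace (m + m) with (m + m + 0) by lia. rewrite val_alt_even, Hm.
    simpl. rewrite val_nil, !gmul1g, inv1, gmul1g, mulg1, xorb_false_r. reflexivity.
Qed.

Lemma xfold_val_eq l1 l2 : val l1 = val l2 -> forall x, xfold x (rhos l1) = xfold x (rhos l2).
Proof.
  intros E x. destruct PiP_hom as [g [Hg Hs]].
  assert (K : forall l, g (val l) = prodl (map PiP l)).
  { intro l. unfold val. rewrite hom_prodl, map_map by auto. f_equal. apply map_ext. auto. }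
  assert (Q := f_equal (fun p => snd (pf p (x, false))) (f_equal g E)). simpl in Q.
  rewrite !K, !pf_PiP, !apw_formula in Q. simpl in Q. exact Q.
Qed.

Lemma reduced_alt a b m j : order_is (s a * s b) m -> j <= m -> reduced (alt a b j).
Proof.
  intros Ho Hj. unfold reduced. rewrite length_alt. split.
  - exists (alt a b j). split; auto. apply length_alt.
  - intros l El. rewrite <- (length_alt a b j), <- (length_rhos (alt a b j)), <- (length_rhos l).
    apply NoDup_incl_length. eapply rhos_alt_nodup; eauto.
    intros x Hx. apply xfold_true_in. rewrite (xfold_val_eq El).
    apply xfold_in; auto. eapply rhos_alt_nodup; eauto.
Qed.

Lemma reduced_app L1 L2 : reduced (L1 ++ L2) -> reduced L1 /\ reduced L2.
Proof.
  intros [_ H]. split; split.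
  - exists L1; auto.
  - intros l E. assert (val (l ++ L2) = val (L1 ++ L2)) by (rewrite !val_app; f_equal; exact E).
    apply H in H0. rewrite !length_app in H0. lia.
  - exists L2; auto.
  - intros l E. assert (val (L1 ++ l) = val (L1 ++ L2)) by (rewrite !val_app; f_equal; exact E).
    apply H in H0. rewrite !length_app in H0. lia.
Qed.

Lemma reduced_rev L : reduced L -> reduced (rev L).
Proof.
  intros [_ H]. split. exists (rev L); auto.
  intros l E. rewrite length_rev. rewrite <- (length_rev l). apply H.
  change (val (rev l) = val L). rewrite val_rev. change (val l) with (prodl (map s l)). rewrite E, val_rev, invK. reflexivity.
Qed.

Lemma reduced_firstn L k : reduced L -> reduced (firstn k L).
Proof. intro H. rewrite <- (firstn_skipn k L) in H. apply reduced_app in H. tauto. Qed.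
Lemma reduced_skipn L k : reduced L -> reduced (skipn k L).
Proof. intro H. rewrite <- (firstn_skipn k L) in H. apply reduced_app in H. tauto. Qed.

Lemma reduced_single a : reduced [a].
Proof.
  split. exists [a]; auto. intros l E. destruct l. simpl in E. exfalso.
  apply (@s_neq1 a). rewrite <- (mulg1 (s a)). symmetry. exact E. simpl; lia.
Qed.

Lemma reduced_nil : reduced [].
Proof. split. exists []; auto. intros; simpl; lia. Qed.

Lemma word_length_unique (x : Waff) k k' : word_length s x k -> word_length s x k' -> k = k'.
Proof.
  intros [[l [Hl El]] H] [[l' [Hl' El']] H']. apply H in El'. apply H' in El. lia.
Qed.

Lemma gen_words (x : Waff) : exists L, val L = x.
Proof. destruct Hcox as [_ [_ [H _]]]. destruct (H x) as [l El]. exists l. symmetry. exact El. Qed.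
End Coxeter.


Ltac gnorm := repeat (progress (rewrite ?invM, ?invK, ?inv1, ?gmulA, ?gmul1g, ?mulg1, ?gmulVg, ?mulgV, ?mulgK, ?mulgKV)).

Lemma gsolve1 (G : group) (V a b X : G) : V * a = b * X -> a * ginv X = ginv V * b.
Proof. intro H. apply (mulg_injl (x:=V)). rewrite gmulA, H. gnorm. reflexivity. Qed.
Lemma gsolve2 (G : group) (X Y U Z : G) : X * Y = U * Z -> Y * ginv Z = ginv X * U.
Proof. intro H. apply gsolve1. exact H. Qed.

Section Main.
Variables (Waff W W1 : group) (Sg : Type) (s : Sg -> Waff) (iota : Waff -> W) (Omega : W -> Prop)
  (pi : W1 -> W) (n : Sg -> W1) (A : group) (Tg : W1 -> A).
Hypothesis Hpro : is_pro_p_coxeter s iota Omega pi n.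
Hypothesis HA : is_Aff_presentation s iota Omega pi Tg.

Lemma Hcox : is_coxeter_system s.
Proof. apply Hpro. Qed.
Lemma iota_hom : is_hom iota.
Proof. apply Hpro. Qed.
Lemma iota_inj a b : iota a = iota b -> a = b.
Proof. apply Hpro. Qed.
Lemma Om1 : Omega gone.
Proof. apply Hpro. Qed.
Lemma OmM u v : Omega u -> Omega v -> Omega (u * v).
Proof. apply Hpro. Qed.
Lemma OmV u : Omega u -> Omega (ginv u).
Proof. apply Hpro. Qed.
Lemma Hdec (w : W) : exists a u, Omega u /\ w = iota a * u.
Proof. apply Hpro. Qed.
Lemma Hdec_uniq a u a' u' : Omega u -> Omega u' -> iota a * u = iota a' * u' -> a = a' /\ u = u'.
Proof. apply Hpro. Qed.
Lemma Om_conj u x : Omega u -> exists y, u * iota (s x) * ginv u = iota (s y).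
Proof. apply Hpro. Qed.
Lemma pi_hom : is_hom pi.
Proof. apply Hpro. Qed.
Lemma pi_surj (w : W) : exists w1, pi w1 = w.
Proof. apply Hpro. Qed.
Lemma pi_n a : pi (n a) = iota (s a).
Proof. apply Hpro. Qed.
Lemma braid_n a b m : order_is (s a * s b) m -> prodl (map n (alt a b m)) = prodl (map n (alt b a m)).
Proof. apply Hpro. Qed.
Lemma aff : aff_rel s iota Omega pi Tg.
Proof. apply HA. Qed.
Lemma s_inj a b : s a = s b -> a = b.
Proof. apply Hcox. Qed.

Lemma pi_mul x y : pi (x * y) = pi x * pi y.
Proof. apply pi_hom. Qed.
Lemma pi_inv x : pi (ginv x) = ginv (pi x).
Proof. apply homV, pi_hom. Qed.
Lemma pi_one : pi gone = gone.
Proof. apply hom1, pi_hom. Qed.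
Lemma iota_mul x y : iota (x * y) = iota x * iota y.
Proof. apply iota_hom. Qed.
Lemma iota_inv x : iota (ginv x) = ginv (iota x).
Proof. apply homV, iota_hom. Qed.
Lemma iota_one : iota gone = gone.
Proof. apply hom1, iota_hom. Qed.

Definition N (L : list Sg) : W1 := prodl (map n L).
Lemma N_cons c L : N (c :: L) = n c * N L.
Proof. reflexivity. Qed.
Lemma N_nil : N [] = gone.
Proof. reflexivity. Qed.
Lemma N_app L1 L2 : N (L1 ++ L2) = N L1 * N L2.
Proof. unfold N. rewrite map_app. apply prodl_app. Qed.

Lemma pi_N L : pi (N L) = iota (val s L).
Proof.
  induction L. rewrite N_nil, val_nil, pi_one, iota_one. reflexivity.
  rewrite N_cons, pi_mul, IHL, pi_n, val_cons, iota_mul. reflexivity.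
Qed.
Lemma iota_s_invol a : ginv (iota (s a)) = iota (s a).
Proof. rewrite <- iota_inv, (invol_inv (s_inv Hcox a)). reflexivity. Qed.
Lemma pi_Ninv L : pi (ginv (N L)) = iota (val s (rev L)).
Proof. rewrite pi_inv, pi_N, val_rev, iota_inv. reflexivity. apply Hcox. Qed.

Ltac pisimpl := repeat (progress (rewrite ?pi_mul, ?pi_inv, ?pi_one, ?pi_N, ?pi_n, ?iota_mul, ?iota_inv, ?iota_one)).

Lemma wl_one : word_length s gone 0.
Proof. split. exists []; auto. intros; lia. Qed.
Lemma wl_s a : word_length s (s a) 1.
Proof. pose proof (reduced_single Hcox a) as H. unfold reduced, val in H. simpl in H. rewrite mulg1 in H. exact H. Qed.

Lemma lenW_iu c u k : Omega u -> word_length s c k -> lenW s iota Omega (iota c * u) k.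
Proof. intros Hu Hc. exists c, u. auto. Qed.
Lemma lenW_i c k : word_length s c k -> lenW s iota Omega (iota c) k.
Proof. intro H. rewrite <- (mulg1 (iota c)). apply lenW_iu; auto. apply Om1. Qed.
Lemma lenW_O u : Omega u -> lenW s iota Omega u 0.
Proof. intro H. rewrite <- (gmul1g u), <- iota_one. apply lenW_iu; auto. apply wl_one. Qed.
Lemma lenW_red L : reduced s L -> lenW s iota Omega (iota (val s L)) (length L).
Proof. intro H. apply lenW_i. exact H. Qed.

Lemma Tg_Om x y : Omega (pi x) -> Omega (pi y) -> Tg (x * y) = Tg x * Tg y.
Proof.
  intros Hx Hy. apply (@aff x y 0 0); apply lenW_O; auto. rewrite pi_mul. apply OmM; auto.
Qed.
Lemma Tg1 : Tg gone = gone.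
Proof. apply idem1. rewrite <- Tg_Om, gmul1g; auto; rewrite pi_one; apply Om1. Qed.
Lemma Tg_ker x y : pi x = gone -> pi y = gone -> Tg (x * y) = Tg x * Tg y.
Proof. intros Hx Hy. apply Tg_Om; [rewrite Hx|rewrite Hy]; apply Om1. Qed.


Lemma lenW_N L : reduced s L -> lenW s iota Omega (pi (N L)) (length L).
Proof. intro H. rewrite pi_N. apply lenW_red; auto. Qed.
Lemma lenW_Ninv L : reduced s L -> lenW s iota Omega (pi (ginv (N L))) (length L).
Proof. intro H. rewrite pi_Ninv, <- length_rev. apply lenW_red. apply reduced_rev; auto. apply Hcox. Qed.
Lemma lenW_n c : lenW s iota Omega (pi (n c)) 1.
Proof. rewrite pi_n. apply lenW_i, wl_s. Qed.
Lemma lenW_ninv c : lenW s iota Omega (pi (ginv (n c))) 1.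
Proof. rewrite pi_inv, pi_n, iota_s_invol. apply lenW_i, wl_s. Qed.
Lemma lenW_red' L k : reduced s L -> length L = k -> lenW s iota Omega (iota (val s L)) k.
Proof. intros H <-. apply lenW_red; auto. Qed.
Lemma lenW_N' L k : reduced s L -> length L = k -> lenW s iota Omega (pi (N L)) k.
Proof. intros H <-. apply lenW_N; auto. Qed.
Lemma lenW_Ninv' L k : reduced s L -> length L = k -> lenW s iota Omega (pi (ginv (N L))) k.
Proof. intros H <-. apply lenW_Ninv; auto. Qed.
Lemma red_tail c L : reduced s (c :: L) -> reduced s L.
Proof. intro H. apply (reduced_app (L1:=[c]) (L2:=L)) in H. tauto. Qed.

Definition th0 (e : bool) (c : Sg) : A := if e then Tg (n c) else ginv (Tg (ginv (n c))).

Fixpoint ThO (o : W1 -> Sg -> bool) (L : list Sg) : A :=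
  match L with [] => gone | c :: L => th0 (o gone c) c * ThO (orient_act o (n c)) L end.

Fixpoint ThF (f : nat -> bool) (L : list Sg) : A :=
  match L with [] => gone | c :: L => th0 (f 0) c * ThF (fun i => f (S i)) L end.

Definition Tpos (L : list Sg) : A := prodl (map (fun c => Tg (n c)) L).
Definition Tneg (L : list Sg) : A := prodl (map (fun c => ginv (Tg (ginv (n c)))) L).

Lemma Tpos_red L : reduced s L -> Tpos L = Tg (N L).
Proof.
  induction L as [|c L IH]; intro H. unfold Tpos; simpl. rewrite N_nil, Tg1. reflexivity.
  unfold Tpos in *; simpl. rewrite IH by (eapply red_tail; eauto). rewrite N_cons.
  symmetry. apply (@aff (n c) (N L) 1 (length L)). apply lenW_n. apply lenW_N; eapply red_tail; eauto.
  exact (lenW_N H).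
Qed.

Lemma Tneg_red L : reduced s L -> Tneg L = ginv (Tg (ginv (N L))).
Proof.
  induction L as [|c L IH]; intro H. unfold Tneg; simpl. rewrite N_nil, inv1, Tg1, inv1. reflexivity.
  unfold Tneg in *; simpl. rewrite IH by (eapply red_tail; eauto). rewrite N_cons.
  rewrite <- invM. f_equal. rewrite invM.
  symmetry. rewrite (@aff (ginv (N L)) (ginv (n c)) (length L) 1). reflexivity.
  apply lenW_Ninv; eapply red_tail; eauto. apply lenW_ninv.
  rewrite <- invM, Nat.add_1_r. exact (lenW_Ninv H).
Qed.

Lemma ThF_ext f g L : (forall i, i < length L -> f i = g i) -> ThF f L = ThF g L.
Proof.
  revert f g; induction L; intros f g H; simpl; auto. rewrite H by (simpl; lia). f_equal.
  apply IHL. intros i Hi. apply H. simpl; lia.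
Qed.

Lemma ThF_pos f L k : (forall i, i < length L -> f i = (i <? k)) ->
  ThF f L = Tpos (firstn k L) * Tneg (skipn k L).
Proof.
  revert f k; induction L as [|c L IH]; intros f k H.
  - simpl. rewrite firstn_nil, skipn_nil. unfold Tpos, Tneg; simpl. rewrite gmul1g; auto.
  - simpl. rewrite (H 0) by (simpl; lia). destruct k as [|k].
    + simpl. rewrite (IH _ 0). unfold Tpos, Tneg, th0; simpl. rewrite !gmul1g. reflexivity.
      intros i Hi. rewrite H by (simpl; lia). reflexivity.
    + simpl. rewrite (IH _ k). unfold Tpos, th0; simpl. apply gmulA.
      intros i Hi. rewrite H by (simpl; lia). reflexivity.
Qed.

Lemma ThF_neg f L k : (forall i, i < length L -> f i = negb (i <? k)) ->
  ThF f L = Tneg (firstn k L) * Tpos (skipn k L).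
Proof.
  revert f k; induction L as [|c L IH]; intros f k H.
  - simpl. rewrite firstn_nil, skipn_nil. unfold Tpos, Tneg; simpl. rewrite gmul1g; auto.
  - simpl. rewrite (H 0) by (simpl; lia). destruct k as [|k].
    + simpl. rewrite (IH _ 0). unfold Tpos, Tneg, th0; simpl. rewrite !gmul1g. reflexivity.
      intros i Hi. rewrite H by (simpl; lia). reflexivity.
    + simpl. rewrite (IH _ k). unfold Tneg, th0; simpl. apply gmulA.
      intros i Hi. rewrite H by (simpl; lia). reflexivity.
Qed.


Lemma red_alt_any a b m j : order_is (s a * s b) m -> j <= m ->
  reduced s (alt a b j) /\ reduced s (alt b a j).
Proof.
  intros Ho Hj. split. eapply reduced_alt; eauto. apply Hcox.
  eapply reduced_alt; eauto. apply Hcox. apply order_swap; auto; apply (s_inv Hcox).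
Qed.

Lemma coreA a b m k : order_is (s a * s b) m -> k <= m ->
  Tpos (firstn k (alt a b m)) * Tneg (skipn k (alt a b m)) =
  Tneg (firstn (m - k) (alt b a m)) * Tpos (skipn (m - k) (alt b a m)).
Proof.
  intros Ho Hk.
  assert (EN : N (alt a b m) = N (alt b a m)) by (apply braid_n; auto).
  rewrite <- (firstn_skipn k (alt a b m)), <- (firstn_skipn (m - k) (alt b a m)), !N_app in EN.
  rewrite !firstn_alt, !skipn_alt in * by lia.
  set (c := ev k a b) in *. set (d := ev k b a) in *.
  set (c' := ev (m - k) b a) in *. set (d' := ev (m - k) a b) in *.
  assert (Rcd : reduced s (alt c d (m - k))).
  { unfold c, d, ev. destruct (Nat.even k); apply (red_alt_any Ho); lia. }
  assert (Rcd' : reduced s (alt c' d' (m - (m - k)))).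
  { unfold c', d', ev. destruct (Nat.even (m - k)); apply (red_alt_any Ho); lia. }
  assert (Rab : reduced s (alt a b k)) by (apply (red_alt_any Ho); lia).
  assert (Rba : reduced s (alt b a (m - k))) by (apply (red_alt_any Ho); lia).
  rewrite Tpos_red, Tneg_red, Tneg_red, Tpos_red by auto.
  set (P1 := N (alt a b k)) in *. set (Q1 := N (alt c d (m - k))) in *.
  set (P2 := N (alt b a (m - k))) in *. set (Q2 := N (alt c' d' (m - (m - k)))) in *.
  assert (E2 : ginv P2 * P1 = Q2 * ginv Q1).
  { transitivity (ginv P2 * (P1 * Q1) * ginv Q1). gnorm; reflexivity.
    rewrite EN. gnorm. reflexivity. }
  assert (LP : lenW s iota Omega (pi (ginv P2 * P1)) ((m - k) + k)).
  { unfold P1, P2. rewrite pi_mul, pi_Ninv, pi_N, <- iota_mul, <- val_app, rev_alt_app.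
    apply lenW_red'; [|apply length_alt]. unfold ev. destruct (Nat.even (m - k)); apply (red_alt_any Ho); lia. }
  apply gsolve2.
  rewrite <- (@aff (ginv P2) P1 (m - k) k).
  rewrite <- (@aff Q2 (ginv Q1) (m - (m - k)) (m - k)).
  rewrite E2. reflexivity.
  - apply lenW_N'; auto. apply length_alt.
  - apply lenW_Ninv'; auto. apply length_alt.
  - rewrite <- E2. replace (m - (m - k) + (m - k)) with (m - k + k) by lia. exact LP.
  - apply lenW_Ninv'; auto. apply length_alt.
  - apply lenW_N'; auto. apply length_alt.
  - exact LP.
Qed.


Definition isori (o : W1 -> Sg -> bool) := is_orientation_W1 s iota Omega pi o.
Definition ori_data (o : W1 -> Sg -> bool) (O : W -> Sg -> bool) (oa : Waff -> Sg -> bool) :=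
  is_orientation_aff s oa /\
  (forall a u x y, Omega u -> iota (s y) = u * iota (s x) * ginv u -> O (iota a * u) x = oa a y) /\
  (forall w x, o w x = O (pi w) x).
Lemma isori_data o : isori o -> exists O oa, ori_data o O oa.
Proof.
  intros [O [[oa [H1 H2]] H3]]. exists O, oa. split; auto.
Qed.

Lemma act_act (o : W1 -> Sg -> bool) y z : orient_act (orient_act o y) z = orient_act o (y * z).
Proof. unfold orient_act. apply functional_extensionality; intro w'. rewrite gmulA. reflexivity. Qed.
Lemma act_one (o : W1 -> Sg -> bool) : orient_act o gone = o.
Proof.
  unfold orient_act. apply functional_extensionality; intro w'. apply functional_extensionality; intro x.
  rewrite gmul1g. reflexivity.
Qed.
Lemma act_pi o O oa y1 y2 : ori_data o O oa -> pi y1 = pi y2 -> orient_act o y1 = orient_act o y2.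
Proof.
  intros [_ [_ H]] E. unfold orient_act. apply functional_extensionality; intro w'.
  apply functional_extensionality; intro x. rewrite !H, !pi_mul, E. reflexivity.
Qed.
Lemma o_val o O oa y w x : ori_data o O oa -> pi y = iota w -> o y x = oa w x.
Proof.
  intros [_ [HW H]] E. rewrite H, E, <- (mulg1 (iota w)). apply HW. apply Om1.
  gnorm. reflexivity.
Qed.

Lemma ThO_F o O oa j : ori_data o O oa -> forall a b y w, pi y = iota w ->
  ThO (orient_act o y) (alt a b j) = ThF (fun i => oa (w * val s (alt a b i)) (ev i a b)) (alt a b j).
Proof.
  intro D. induction j; intros a b y w E; [reflexivity|].
  simpl. f_equal.
  - unfold orient_act. rewrite (o_val (w:=w) a D). rewrite val_nil, mulg1. reflexivity.
    rewrite pi_mul, pi_one, mulg1; auto.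
  - rewrite act_act. rewrite (IHj b a (y * n a) (w * s a)).
    + apply ThF_ext. intros i _. rewrite val_cons, gmulA. f_equal.
      unfold ev. rewrite Nat.even_succ, <- Nat.negb_even. destruct (Nat.even i); reflexivity.
    + rewrite pi_mul, E, pi_n, iota_mul. reflexivity.
Qed.

Lemma braidTh o O oa y w a b m : ori_data o O oa -> pi y = iota w -> order_is (s a * s b) m ->
  ThO (orient_act o y) (alt a b m) = ThO (orient_act o y) (alt b a m).
Proof.
  intros D E Ho. rewrite (ThO_F m D a b E), (ThO_F m D b a E).
  destruct D as [[_ OR2] _]. specialize (OR2 a b m w Ho). simpl in OR2.
  destruct OR2 as [k [Hk [[H1 H2]|[H1 H2]]]].
  - rewrite (@ThF_pos _ _ k), (@ThF_neg _ _ (m - k)). apply coreA; auto.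
    + intros i Hi. rewrite length_alt in Hi. apply H2; auto.
    + intros i Hi. rewrite length_alt in Hi. apply H1; auto.
  - rewrite (@ThF_neg _ _ k), (@ThF_pos _ _ (m - k)).
    + symmetry. rewrite coreA. replace (m - (m - k)) with k by lia. reflexivity.
      apply order_swap; auto; apply (s_inv Hcox). lia.
    + intros i Hi. rewrite length_alt in Hi. apply H2; auto.
    + intros i Hi. rewrite length_alt in Hi. apply H1; auto.
Qed.

Lemma pi_nn c : pi (n c * n c) = gone.
Proof. rewrite pi_mul, pi_n, <- iota_mul, (s_inv Hcox), iota_one. reflexivity. Qed.

Lemma Om_pi_one x : pi x = gone -> Omega (pi x).
Proof. intro H; rewrite H; apply Om1. Qed.

Lemma ThO_cc o O oa y w c : ori_data o O oa -> pi y = iota w ->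
  ThO (orient_act o y) [c; c] = Tg (n c * n c).
Proof.
  intros D E. simpl. unfold orient_act.
  rewrite (o_val (w := w) c D) by (rewrite pi_mul, pi_one, mulg1; auto).
  rewrite (o_val (w := w * s c) c D) by (rewrite !pi_mul, pi_one, mulg1, pi_n, E, iota_mul; auto).
  destruct D as [[OR1 _] _]. rewrite OR1. destruct (oa w c); unfold th0; simpl.
  - assert (Q : Tg (n c) = Tg (n c * n c) * Tg (ginv (n c))).
    { transitivity (Tg ((n c * n c) * ginv (n c))). f_equal; gnorm; reflexivity.
      apply (@aff _ _ 0 1). apply lenW_O, Om_pi_one, pi_nn. apply lenW_ninv.
      replace ((n c * n c) * ginv (n c)) with (n c) by (gnorm; reflexivity). apply lenW_n. }
    rewrite Q. gnorm. reflexivity.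
  - assert (Q : Tg (n c) = Tg (ginv (n c)) * Tg (n c * n c)).
    { transitivity (Tg (ginv (n c) * (n c * n c))). f_equal; gnorm; reflexivity.
      apply (@aff _ _ 1 0). apply lenW_ninv. apply lenW_O, Om_pi_one, pi_nn.
      replace (ginv (n c) * (n c * n c)) with (n c) by (gnorm; reflexivity). apply lenW_n. }
    rewrite Q. gnorm. reflexivity.
Qed.

Lemma Tcomm1 t e c : pi t = gone -> Tg t * th0 e c = th0 e c * Tg (ginv (n c) * t * n c).
Proof.
  intro Ht. assert (Ht1 : pi (ginv (n c) * t * n c) = gone).
  { pisimpl. rewrite Ht. gnorm. reflexivity. }
  destruct e; unfold th0.
  - rewrite <- (@aff t (n c) 0 1), <- (@aff (n c) _ 1 0). f_equal. gnorm. reflexivity.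
    + apply lenW_n.
    + apply lenW_O, Om_pi_one; auto.
    + replace (n c * (ginv (n c) * t * n c)) with (t * n c) by (gnorm; reflexivity).
      rewrite pi_mul, Ht, gmul1g. apply lenW_n.
    + apply lenW_O, Om_pi_one; auto.
    + apply lenW_n.
    + rewrite pi_mul, Ht, gmul1g. apply lenW_n.
  - apply gsolve1. rewrite <- (@aff (ginv (n c)) t 1 0), <- (@aff _ (ginv (n c)) 0 1).
    f_equal. gnorm. reflexivity.
    + apply lenW_O, Om_pi_one; auto.
    + apply lenW_ninv.
    + rewrite pi_mul, Ht1, gmul1g. apply lenW_ninv.
    + apply lenW_ninv.
    + apply lenW_O, Om_pi_one; auto.
    + rewrite pi_mul, Ht, mulg1. apply lenW_ninv.
Qed.

Lemma Tcomm L : forall o t, pi t = gone -> Tg t * ThO o L = ThO o L * Tg (ginv (N L) * t * N L).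
Proof.
  induction L as [|c L IH]; intros o t Ht; simpl.
  - rewrite N_nil. gnorm. reflexivity.
  - rewrite gmulA, Tcomm1 by auto. rewrite <- gmulA, IH. rewrite N_cons. gnorm. reflexivity.
    pisimpl. rewrite Ht. gnorm. reflexivity.
Qed.

Lemma Tcomm_inv L o t : pi t = gone -> ginv (Tg t) * ThO o L = ThO o L * ginv (Tg (ginv (N L) * t * N L)).
Proof.
  intro Ht. pose proof (Tcomm L o Ht) as H.
  apply (mulg_injl (x := Tg t)). rewrite gmulA, mulgV, gmul1g, gmulA, H. gnorm. reflexivity.
Qed.


Definition sig_ (b : Waff) : W1 :=
  match excluded_middle_informative (b = gone) with
  | left _ => gone
  | right _ => proj1_sig (constructive_indefinite_description _ (pi_surj (iota b)))
  end.
Lemma pi_sig b : pi (sig_ b) = iota b.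
Proof.
  unfold sig_. destruct excluded_middle_informative as [->|_].
  rewrite pi_one, iota_one; reflexivity.
  apply (proj2_sig (constructive_indefinite_description _ (pi_surj (iota b)))).
Qed.
Lemma sig1 : sig_ gone = gone.
Proof. unfold sig_. destruct excluded_middle_informative; auto. congruence. Qed.

Ltac pisimpl2 := repeat (progress (rewrite ?pi_mul, ?pi_inv, ?pi_one, ?pi_N, ?pi_n, ?pi_sig, ?iota_mul, ?iota_inv, ?iota_one)).

Definition XX : Type := (((W1 -> Sg -> bool) -> A) * Waff)%type.

Definition Rh (c : Sg) (xf : XX) : XX :=
  (fun o => fst xf o * (if excluded_middle_informative (isori o) then
     th0 (orient_act o (sig_ (snd xf)) gone c) c *
     ginv (Tg (ginv (sig_ (snd xf * s c)) * sig_ (snd xf) * n c)) else gone),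
   snd xf * s c).

Definition apw2 (L : list Sg) (x : XX) : XX := fold_left (fun y c => Rh c y) L x.

Lemma RhF L : forall f b, apw2 L (f, b) =
  (fun o => f o * (if excluded_middle_informative (isori o) then
     ThO (orient_act o (sig_ b)) L * ginv (Tg (ginv (sig_ (b * val s L)) * sig_ b * N L)) else gone),
   b * val s L).
Proof.
  induction L as [|c L IH]; intros f b.
  - simpl. rewrite val_nil, N_nil, !mulg1. f_equal. apply functional_extensionality; intro o.
    destruct excluded_middle_informative; gnorm; rewrite ?Tg1; gnorm; reflexivity.
  - unfold apw2 in *. simpl fold_left. unfold Rh at 2. simpl fst; simpl snd. rewrite IH.
    rewrite val_cons, N_cons. f_equal.
    + apply functional_extensionality; intro o.
      destruct (excluded_middle_informative (isori o)) as [Ho|Ho]; [|gnorm; reflexivity].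
      destruct (isori_data Ho) as [O [oa D]].
      simpl ThO. rewrite act_act.
      assert (Ey : orient_act o (sig_ (b * s c)) = orient_act o (sig_ b * n c)).
      { apply (act_pi D). rewrite pi_mul, !pi_sig, pi_n, iota_mul. reflexivity. }
      rewrite Ey. set (Th := ThO (orient_act o (sig_ b * n c)) L).
      set (t1 := ginv (sig_ (b * s c)) * sig_ b * n c).
      assert (Ht1 : pi t1 = gone).
      { unfold t1. rewrite !pi_mul, pi_inv, !pi_sig, pi_n, iota_mul. gnorm. reflexivity. }
      rewrite <- !gmulA. f_equal. f_equal.
      unfold Th. rewrite gmulA, (Tcomm_inv L _ Ht1), <- gmulA. f_equal.
      rewrite <- invM. f_equal. rewrite <- Tg_ker.
      * f_equal. unfold t1. rewrite !gmulA. gnorm. reflexivity.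
      * pisimpl2. gnorm. reflexivity.
      * pisimpl2. rewrite Ht1. gnorm. reflexivity.
    + symmetry; apply gmulA.
Qed.

Lemma val_cc c : val s [c; c] = gone.
Proof. rewrite !val_cons, val_nil, mulg1. apply (s_inv Hcox). Qed.

Lemma Rh_invol c x : Rh c (Rh c x) = x.
Proof.
  destruct x as [f b]. change (Rh c (Rh c (f, b))) with (apw2 [c; c] (f, b)).
  rewrite RhF, val_cc, mulg1. f_equal. apply functional_extensionality; intro o.
  destruct (excluded_middle_informative (isori o)) as [Ho|Ho]; [|gnorm; reflexivity].
  destruct (isori_data Ho) as [O [oa D]].
  rewrite (ThO_cc _ D (pi_sig b)). rewrite !N_cons, N_nil. gnorm. reflexivity.
Qed.

Definition Rp (c : Sg) : PermG XX := inv_perm (Rh_invol c).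

Lemma pf_Rp L x : pf (prodl (map Rp L)) x = apw2 L x.
Proof. rewrite pf_prodl. revert x; induction L; intros x; simpl; auto. Qed.

Lemma val_braid a b m : order_is (s a * s b) m -> val s (alt a b m) = val s (alt b a m).
Proof.
  intros [_ [H _]]. unfold val. rewrite !map_alt. apply alt_braid_iff; auto; apply (s_inv Hcox).
Qed.

Lemma Rh_braid a b m : order_is (s a * s b) m -> forall x, apw2 (alt a b m) x = apw2 (alt b a m) x.
Proof.
  intros Ho [f b0]. rewrite !RhF. rewrite (val_braid Ho).
  assert (EN : N (alt a b m) = N (alt b a m)) by (apply braid_n; auto). rewrite EN.
  f_equal. apply functional_extensionality; intro o.
  destruct (excluded_middle_informative (isori o)) as [Hi|Hi]; auto.
  destruct (isori_data Hi) as [O [oa D]].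
  rewrite (@braidTh o O oa (sig_ b0) b0 a b m D (pi_sig b0) Ho). reflexivity.
Qed.

Lemma Rp_hom : exists g : Waff -> PermG XX, is_hom g /\ forall c, g (s c) = Rp c.
Proof.
  destruct Hcox as [_ [_ [_ U]]]. apply U.
  - intro c. apply perm_ext. intro x. simpl. apply Rh_invol.
  - intros a b m Ho. apply alt_braid_iff.
    + apply perm_ext. intro x. simpl. apply Rh_invol.
    + apply perm_ext. intro x. simpl. apply Rh_invol.
    + rewrite <- !(map_alt Rp). apply perm_ext. intro x. rewrite !pf_Rp. apply Rh_braid; auto.
Qed.

Lemma IND L1 L2 o : isori o -> val s L1 = val s L2 ->
  ThO o L1 * Tg (ginv (N L1) * N L2) = ThO o L2.
Proof.
  intros Ho E. destruct Rp_hom as [g [Hg Hs]].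
  assert (K : forall l, g (val s l) = prodl (map Rp l)).
  { intro l. unfold val. rewrite hom_prodl, map_map by auto. f_equal. apply map_ext. auto. }
  assert (Q := f_equal (fun p => fst (pf p (fun _ => gone, gone)) o) (f_equal g E)). simpl in Q.
  rewrite !K, !pf_Rp, !RhF in Q. simpl in Q.
  destruct (excluded_middle_informative (isori o)) as [_|Hn]; [|contradiction].
  rewrite sig1, act_one, !gmul1g, !mulg1, E in Q.
  set (sc := sig_ (val s L2)) in Q.
  assert (Hsplit : Tg (ginv sc * N L2) = Tg (ginv sc * N L1) * Tg (ginv (N L1) * N L2)).
  { rewrite <- Tg_ker. f_equal. gnorm. reflexivity.
    - unfold sc. pisimpl2. rewrite E. gnorm. reflexivity.
    - pisimpl2. rewrite E. gnorm. reflexivity. }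
  transitivity (ThO o L1 * ginv (Tg (ginv sc * N L1)) * Tg (ginv sc * N L2)).
  - rewrite Hsplit. gnorm. reflexivity.
  - rewrite Q. gnorm. reflexivity.
Qed.


Lemma isori_act_n o c : isori o -> isori (orient_act o (n c)).
Proof.
  intro Ho. destruct (isori_data Ho) as [O [oa [[OR1 OR2] [HW H1]]]].
  exists (fun z x => O (iota (s c) * z) x). split.
  - exists (fun a y => oa (s c * a) y). split.
    + split.
      * intros w a. simpl. rewrite gmulA. apply OR1.
      * intros a b m w Hm. specialize (OR2 a b m (s c * w) Hm). simpl in OR2 |- *.
        destruct OR2 as [k [Hk Hc]]. exists k. split; auto.
        destruct Hc as [[Q1 Q2]|[Q1 Q2]]; [left|right]; split; intros i Hi; rewrite gmulA; auto.
    + intros a u x y Hu E. simpl. rewrite gmulA, <- iota_mul. apply HW; auto.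
  - intros w x. unfold orient_act. rewrite H1, pi_mul, pi_n. reflexivity.
Qed.

Definition da (w : W1) : Waff :=
  proj1_sig (constructive_indefinite_description (fun a => exists u, Omega u /\ pi w = iota a * u) (Hdec (pi w))).
Lemma da_spec w : exists u, Omega u /\ pi w = iota (da w) * u.
Proof. unfold da. exact (proj2_sig (constructive_indefinite_description (fun a => exists u, Omega u /\ pi w = iota a * u) (Hdec (pi w)))). Qed.
Definition wd (b : Waff) : list Sg :=
  proj1_sig (constructive_indefinite_description _ (gen_words Hcox b)).
Lemma wd_spec b : val s (wd b) = b.
Proof. unfold wd. exact (proj2_sig (constructive_indefinite_description (fun L => val s L = b) (gen_words Hcox b))). Qed.
Definition Lw (w : W1) := wd (da w).

Lemma Om_Lw w : Omega (pi (ginv (N (Lw w)) * w)).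
Proof.
  destruct (da_spec w) as [u [Hu E]]. unfold Lw. rewrite pi_mul, pi_inv, pi_N, wd_spec, E.
  gnorm. exact Hu.
Qed.

Lemma da_unique L w : Omega (pi (ginv (N L) * w)) -> da w = val s L.
Proof.
  intro H. destruct (da_spec w) as [u [Hu E]].
  rewrite pi_mul, pi_inv, pi_N in H.
  assert (E2 : pi w = iota (val s L) * (ginv (iota (val s L)) * pi w)) by (gnorm; reflexivity).
  rewrite E in E2 at 1. apply Hdec_uniq in E2; auto. tauto.
Qed.

Definition theta (w : W1) (o : W1 -> Sg -> bool) : A := ThO o (Lw w) * Tg (ginv (N (Lw w)) * w).

Lemma GEN L w o : isori o -> Omega (pi (ginv (N L) * w)) -> theta w o = ThO o L * Tg (ginv (N L) * w).
Proof.
  intros Ho H. unfold theta.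
  assert (E : val s (Lw w) = val s L) by (unfold Lw; rewrite wd_spec; apply da_unique; auto).
  rewrite <- (IND Ho E). rewrite <- gmulA, <- Tg_Om. f_equal. f_equal. gnorm. reflexivity.
  - pisimpl. rewrite E. gnorm. apply Om1.
  - exact H.
Qed.

Definition cl (u : W) (x : Sg) : Sg :=
  epsilon (inhabits x) (fun y => iota (s y) = u * iota (s x) * ginv u).
Lemma cl_spec u x : Omega u -> iota (s (cl u x)) = u * iota (s x) * ginv u.
Proof.
  intro Hu. unfold cl. apply (epsilon_spec (inhabits x) (fun y => iota (s y) = u * iota (s x) * ginv u)).
  destruct (Om_conj x Hu) as [y Hy]. exists y. symmetry. exact Hy.
Qed.

Lemma pi_z1 v x : Omega (pi v) -> pi (ginv (n (cl (pi v) x)) * v * n x) = pi v.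
Proof. intro Hv. rewrite !pi_mul, pi_inv, !pi_n, cl_spec by auto. gnorm. reflexivity. Qed.

Lemma sign_conj o O oa w0 v x : ori_data o O oa -> Omega (pi v) ->
  o (w0 * v) x = o w0 (cl (pi v) x).
Proof.
  intros [_ [HW H1]] Hv. rewrite !H1, pi_mul. set (u := pi v) in *.
  destruct (Hdec (pi w0)) as [c [u0 [Hu0 E0]]]. rewrite E0.
  destruct (Om_conj x (OmM Hu0 Hv)) as [y1 Hy1].
  destruct (Om_conj (cl u x) Hu0) as [y2 Hy2].
  rewrite <- gmulA, (HW c (u0 * u) x y1), (HW c u0 (cl u x) y2); auto.
  - f_equal. apply s_inj, iota_inj. rewrite <- Hy1, <- Hy2, cl_spec by auto. gnorm. reflexivity.
  - apply OmM; auto.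
Qed.

Lemma PL v x e : Omega (pi v) ->
  Tg v * th0 e x = th0 e (cl (pi v) x) * Tg (ginv (n (cl (pi v) x)) * v * n x).
Proof.
  intro Hv. set (y := cl (pi v) x). set (z1 := ginv (n y) * v * n x).
  assert (Hy : iota (s y) = pi v * iota (s x) * ginv (pi v)) by (apply cl_spec; auto).
  assert (Lv : lenW s iota Omega (pi v) 0) by (apply lenW_O; auto).
  assert (Lz : lenW s iota Omega (pi z1) 0) by (apply lenW_O; unfold z1, y; rewrite pi_z1; auto).
  assert (Lx := lenW_n x). assert (Ly := lenW_n y).
  assert (Lxi := lenW_ninv x). assert (Lyi := lenW_ninv y).
  assert (Lvx : lenW s iota Omega (pi (v * n x)) 1).
  { replace (pi (v * n x)) with (iota (s y) * pi v). apply lenW_iu; auto. apply wl_s.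
    rewrite Hy, pi_mul, pi_n. gnorm. reflexivity. }
  assert (Lyz : lenW s iota Omega (pi (n y * z1)) 1).
  { replace (n y * z1) with (v * n x) by (unfold z1; gnorm; reflexivity). exact Lvx. }
  assert (Lyv : lenW s iota Omega (pi (ginv (n y) * v)) 1).
  { replace (pi (ginv (n y) * v)) with (iota (s y) * pi v). apply lenW_iu; auto. apply wl_s.
    rewrite pi_mul, pi_inv, pi_n, iota_s_invol. reflexivity. }
  assert (Lzx : lenW s iota Omega (pi (z1 * ginv (n x))) 1).
  { replace (z1 * ginv (n x)) with (ginv (n y) * v) by (unfold z1; gnorm; reflexivity). exact Lyv. }
  destruct e; unfold th0.
  - rewrite <- (@aff v (n x) 0 1), <- (@aff (n y) z1 1 0); try assumption.
    f_equal. unfold z1. gnorm. reflexivity.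
  - apply gsolve1. rewrite <- (@aff (ginv (n y)) v 1 0), <- (@aff z1 (ginv (n x)) 0 1); try assumption.
    f_equal. unfold z1. gnorm. reflexivity.
Qed.

Lemma CONJ o O oa L : ori_data o O oa -> forall w0 v, Omega (pi v) ->
  Tg v * ThO (orient_act o (w0 * v)) L =
  ThO (orient_act o w0) (map (cl (pi v)) L) * Tg (ginv (N (map (cl (pi v)) L)) * v * N L).
Proof.
  intro D. induction L as [|x L IH]; intros w0 v Hv.
  - simpl. rewrite N_nil. gnorm. reflexivity.
  - simpl ThO. simpl map. set (y := cl (pi v) x).
    assert (Es : orient_act o (w0 * v) gone x = orient_act o w0 gone y).
    { unfold orient_act. rewrite !mulg1. apply (sign_conj _ _ D Hv). }
    rewrite Es, gmulA, PL by auto. fold y. rewrite <- gmulA, !act_act.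
    set (z1 := ginv (n y) * v * n x).
    assert (Ez : w0 * v * n x = (w0 * n y) * z1) by (unfold z1; gnorm; reflexivity).
    assert (Hz : pi z1 = pi v) by (unfold z1, y; apply pi_z1; auto).
    rewrite Ez, IH by (rewrite Hz; auto). rewrite Hz, !N_cons. unfold z1. gnorm. reflexivity.
Qed.

Lemma CONJ_pi L : forall v, Omega (pi v) -> pi (ginv (N (map (cl (pi v)) L)) * v * N L) = pi v.
Proof.
  induction L as [|x L IH]; intros v Hv.
  - simpl. rewrite N_nil. gnorm. reflexivity.
  - simpl map. rewrite !N_cons. set (y := cl (pi v) x).
    set (z1 := ginv (n y) * v * n x).
    assert (Hz : pi z1 = pi v) by (unfold z1, y; apply pi_z1; auto).
    pose proof (IH z1 (ltac:(rewrite Hz; auto))) as K. rewrite Hz in K.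
    transitivity (pi (ginv (N (map (cl (pi v)) L)) * z1 * N L)); [|exact K]. f_equal. unfold z1. gnorm. reflexivity.
Qed.


Lemma ThO_app L1 : forall L2 o, ThO o (L1 ++ L2) = ThO o L1 * ThO (orient_act o (N L1)) L2.
Proof.
  induction L1 as [|c L1 IH]; intros L2 o; simpl.
  - rewrite N_nil, act_one, gmul1g. reflexivity.
  - rewrite IH, act_act, N_cons. apply gmulA.
Qed.

Lemma cocycle w w' o : isori o -> theta (w * w') o = theta w o * theta w' (orient_act o w).
Proof.
  intro Ho. destruct (isori_data Ho) as [O [oa D]].
  unfold theta at 2 3. set (L := Lw w). set (L' := Lw w').
  assert (Hv := Om_Lw w). assert (Hv' := Om_Lw w'). fold L in Hv. fold L' in Hv'.
  assert (Eo : orient_act o w = orient_act o (N L * (ginv (N L) * w))) by (f_equal; gnorm; reflexivity).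
  rewrite Eo. rewrite <- gmulA, (gmulA (Tg (ginv (N L) * w))), (CONJ L' D _ Hv).
  set (L'' := map (cl (pi (ginv (N L) * w))) L').
  assert (Hz := CONJ_pi L' Hv). fold L'' in Hz.
  rewrite <- gmulA, <- Tg_Om; [| rewrite Hz; auto | auto].
  rewrite gmulA, <- ThO_app.
  assert (Ee : ginv (N L'') * (ginv (N L) * w) * N L' * (ginv (N L') * w') = ginv (N (L ++ L'')) * (w * w'))
    by (rewrite N_app; gnorm; reflexivity).
  rewrite Ee. apply GEN; auto.
  rewrite <- Ee, pi_mul, Hz. apply OmM; auto.
Qed.

Lemma clause2 x o : isori o -> theta (n x) o = if o gone x then Tg (n x) else ginv (Tg (ginv (n x))).
Proof.
  intro Ho. rewrite (@GEN [x]); auto.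
  - simpl. rewrite N_cons, N_nil. gnorm. rewrite Tg1. gnorm. reflexivity.
  - rewrite N_cons, N_nil. gnorm. rewrite pi_one. apply Om1.
Qed.

Lemma clause3 u o : Omega (pi u) -> isori o -> theta u o = Tg u.
Proof.
  intros Hu Ho. rewrite (@GEN []); auto.
  - simpl. rewrite N_nil, inv1, !gmul1g. reflexivity.
  - rewrite N_nil, inv1, gmul1g. exact Hu.
Qed.

Lemma uniq_formula th' : theta_spec s iota Omega pi n Tg th' ->
  forall L w o, isori o -> Omega (pi (ginv (N L) * w)) -> th' w o = ThO o L * Tg (ginv (N L) * w).
Proof.
  intros [C1 [C2 C3]] L. induction L as [|c L IH]; intros w o Ho H.
  - rewrite N_nil, inv1, gmul1g in *. simpl. rewrite gmul1g. apply C3; auto.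
  - assert (Ew : w = n c * (ginv (n c) * w)) by (gnorm; reflexivity).
    rewrite Ew at 1. rewrite C1, C2 by auto. rewrite IH.
    + simpl. fold (th0 (o gone c) c). rewrite N_cons. gnorm. reflexivity.
    + apply isori_act_n; auto.
    + replace (ginv (N L) * (ginv (n c) * w)) with (ginv (N (c :: L)) * w) by (rewrite N_cons; gnorm; reflexivity).
      exact H.
Qed.

Lemma main_thm : exists theta0 : W1 -> (W1 -> Sg -> bool) -> A,
    theta_spec s iota Omega pi n Tg theta0 /\
    forall theta' : W1 -> (W1 -> Sg -> bool) -> A,
      theta_spec s iota Omega pi n Tg theta' ->
      forall (w : W1) (o : W1 -> Sg -> bool),
        is_orientation_W1 s iota Omega pi o -> theta' w o = theta0 w o.
Proof.
  exists theta. split.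
  - split; [|split].
    + intros w w' o Ho. apply cocycle; auto.
    + intros x o Ho. apply clause2; auto.
    + intros u o Hu Ho. apply clause3; auto.
  - intros th' Hs w o Ho. rewrite (@uniq_formula th' Hs (Lw w) w o Ho (Om_Lw w)). reflexivity.
Qed.

End Main.


Unset Implicit Arguments.
Theorem theorem2p6p1 (Waff W W1 : group) (S : Type) (s : S -> Waff)
    (iota : Waff -> W) (Omega : W -> Prop) (pi : W1 -> W) (n : S -> W1)
    (Hpro : is_pro_p_coxeter s iota Omega pi n)
    (A : group) (Tg : W1 -> A) (HA : is_Aff_presentation s iota Omega pi Tg) :
  exists theta : W1 -> (W1 -> S -> bool) -> A,
    theta_spec s iota Omega pi n Tg theta /\
    forall theta' : W1 -> (W1 -> S -> bool) -> A,
      theta_spec s iota Omega pi n Tg theta' ->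
      forall (w : W1) (o : W1 -> S -> bool),
        is_orientation_W1 s iota Omega pi o -> theta' w o = theta w o.
Proof.
  exact (main_thm Hpro HA).
Qed.
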